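(* Let $h:(\mathbb{R}^n,0)\to(\mathbb{R}^n,0)$ be a bi-Lipschitz homeomorphism germ, and let $A\subset\mathbb{R}^n$ be a set-germ at $0$ with $0\in\overline{A}$. Then [$LD(h(A))=LD(h(LD(A)))$ and $h(LD(A))$ satisfies condition (SSP)] if and only if [$LD(h^{-1}(LD(h(A))))=LD(A)$ and $h^{-1}(LD(h(A)))$ satisfies condition (SSP)].
   Context: For a set-germ $A\subset\mathbb{R}^n$ at $0$ with $0\in\overline A$, $D(A)=\{a\in S^{n-1}:\exists\, x_i\in A\setminus\{0\},\ x_i\to0,\ x_i/\|x_i\|\to a\}$ and $LD(A)=\{ta:a\in D(A),t\ge0\}$. For sequences, $\|u_m\|\ll\|v_m\|,\|w_m\|$ means $\|u_m\|/\|v_m\|\to0$ and $\|u_m\|/\|w_m\|\to0$. $A$ satisfies condition (SSP) if for every sequence $a_m\in\mathbb{R}^n$ tending to $0$ with $\lim a_m/\|a_m\|\in D(A)$ there is a sequence $b_m\in A$ with $\|a_m-b_m\|\ll\|a_m\|,\|b_m\|$. A bi-Lipschitz homeomorphism germ is a homeomorphism germ $h$ with $h(0)=0$ and constants $0<K_1\le K_2$ with $K_1\|x-y\|\le\|h(x)-h(y)\|\le K_2\|x-y\|$ near $0$. *)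

(* Defs.v *)
From mathcomp Require Import all_boot all_order all_algebra.
From mathcomp Require Import boolp classical_sets reals.
Set Implicit Arguments. Unset Strict Implicit. Unset Printing Implicit Defensive.
Import Order.TTheory GRing.Theory Num.Theory.
Local Open Scope ring_scope.
Local Open Scope classical_set_scope.

Section Defs.
Variables (R : realType) (n : nat).
Notation V := 'rV[R]_n.

Definition enorm (x : V) : R := Num.sqrt (\sum_(i < n) (x ord0 i) ^+ 2).

Definition ball0 (r : R) : set V := [set x | enorm x < r].

Definition seq_cvg (u : nat -> V) (l : V) : Prop :=
  forall e : R, 0 < e -> exists N : nat, forall m, (N <= m)%N -> enorm (u m - l) < e.

Definition zero_in_closure (A : set V) : Prop :=
  forall e : R, 0 < e -> exists x, A x /\ enorm x < e.

Definition Dset (A : set V) : set V :=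
  [set a | enorm a = 1 /\
     exists x : nat -> V, (forall i, A (x i) /\ x i != 0) /\ seq_cvg x 0 /\
       seq_cvg (fun i => (enorm (x i))^-1 *: x i) a].

Definition LD (A : set V) : set V :=
  [set v | exists t a, 0 <= t /\ Dset A a /\ v = t *: a].

Definition negligible (u v : nat -> V) : Prop :=
  forall e : R, 0 < e -> exists N : nat, forall m, (N <= m)%N ->
    enorm (u m) <= e * enorm (v m).

Definition SSP (A : set V) : Prop :=
  forall a : nat -> V, seq_cvg a 0 ->
    (exists d, Dset A d /\ seq_cvg (fun m => (enorm (a m))^-1 *: a m) d) ->
    exists b : nat -> V, (forall m, A (b m)) /\
      negligible (fun m => a m - b m) a /\ negligible (fun m => a m - b m) b.

(* h is a bi-Lipschitz homeomorphism germ (R^n,0) -> (R^n,0), represented on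
   the ball of radius r: bi-Lipschitz there, and its image contains a
   neighbourhood of 0. *)
Definition bilip_homeo_germ (h : V -> V) (r : R) : Prop :=
  h 0 = 0 /\ 0 < r /\
  (exists K1 K2 : R, 0 < K1 /\ K1 <= K2 /\
     forall x y, ball0 r x -> ball0 r y ->
       K1 * enorm (x - y) <= enorm (h x - h y) /\
       enorm (h x - h y) <= K2 * enorm (x - y)) /\
  (exists s : R, 0 < s /\ ball0 s `<=` h @` ball0 r).

(* germ of the image h(B), resp. of the image h^{-1}(B) under the inverse germ *)
Definition gimage (h : V -> V) (r : R) (B : set V) : set V := h @` (B `&` ball0 r).
Definition gpreimage (h : V -> V) (r : R) (B : set V) : set V := (h @^-1` B) `&` ball0 r.

End Defs.

(* Main.v *)
Require Import Defs.
From mathcomp Require Import all_boot all_order all_algebra.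
From mathcomp Require Import boolp classical_sets reals topology normedtype sequences.
From mathcomp Require Import ring lra.
Import Order.TTheory GRing.Theory Num.Theory numFieldNormedType.Exports.
Local Open Scope ring_scope.
Local Open Scope classical_set_scope.
Set Implicit Arguments. Unset Strict Implicit.

Section Norm.
Variables (R : realType) (n : nat).
Notation V := 'rV[R]_n.
Implicit Types x y : V.

Lemma le_sq_le (a b : R) : 0 <= a -> 0 <= b -> a ^+ 2 <= b ^+ 2 -> a <= b.
Proof. by move=> a0 b0; rewrite ler_sqr ?nnegrE. Qed.

Definition sq x : R := \sum_(i < n) (x ord0 i) ^+ 2.
Lemma sq_ge0 x : 0 <= sq x.
Proof. by apply: sumr_ge0 => i _; exact: sqr_ge0. Qed.
Lemma enorm_sq x : enorm x ^+ 2 = sq x.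
Proof. by rewrite /enorm sqr_sqrtr // sq_ge0. Qed.
Lemma enorm_ge0 x : 0 <= enorm x.
Proof. exact: sqrtr_ge0. Qed.
Lemma enorm0 : enorm (0 : V) = 0.
Proof. by rewrite /enorm big1 ?sqrtr0 // => i _; rewrite mxE expr0n. Qed.
Lemma enorm_eq0 x : enorm x = 0 -> x = 0.
Proof.
move=> /eqP; rewrite /enorm sqrtr_eq0 => H.
have H0 : \sum_(i < n) x ord0 i ^+ 2 = 0.
  by apply/eqP; rewrite eq_le H sumr_ge0 // => i _; exact: sqr_ge0.
have := (psumr_eq0P (fun i _ => sqr_ge0 (x ord0 i)) H0) => Hi.
apply/rowP => i; rewrite mxE; apply/eqP; rewrite -sqrf_eq0; apply/eqP.
exact: Hi.
Qed.
Lemma enorm_gt0 x : x != 0 -> 0 < enorm x.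
Proof.
move=> xn0; rewrite lt_neqAle enorm_ge0 andbT; apply/eqP => H.
by move: xn0; rewrite (enorm_eq0 (esym H)) eqxx.
Qed.
Lemma enormZ (a : R) x : enorm (a *: x) = `|a| * enorm x.
Proof.
rewrite /enorm -sqrtr_sqr -sqrtrM ?sqr_ge0 //; congr Num.sqrt.
rewrite mulr_sumr; apply: eq_bigr => i _; rewrite mxE; ring.
Qed.
Lemma enormN x : enorm (- x) = enorm x.
Proof. by rewrite -scaleN1r enormZ normrN normr1 mul1r. Qed.
Lemma enormB x y : enorm (x - y) = enorm (y - x).
Proof. by rewrite -enormN opprB. Qed.

Lemma cauchy x y : \sum_(i < n) x ord0 i * y ord0 i <= enorm x * enorm y.
Proof.
set C := \sum_(i < n) x ord0 i * y ord0 i.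
have [C0|C0] := leP C 0; first by rewrite (le_trans C0) // mulr_ge0 // enorm_ge0.
set A := sq x; set B := sq y.
have key : \sum_(i < n) (B * x ord0 i - C * y ord0 i) ^+ 2 = B * (A * B - C ^+ 2).
  have -> : \sum_(i < n) (B * x ord0 i - C * y ord0 i) ^+ 2 =
     \sum_(i < n) (B ^+ 2 * x ord0 i ^+ 2 - (2 * B * C) * (x ord0 i * y ord0 i)
        + C ^+ 2 * y ord0 i ^+ 2).
    by apply: eq_bigr => i _; ring.
  rewrite big_split /= sumrB -!mulr_sumr -/C; rewrite /A /B /sq; ring.
have B0 : 0 <= B by exact: sq_ge0.
have [Bz|Bp] := eqVneq B 0.
  exfalso.
  have Hy : y = 0.
    by apply: enorm_eq0; rewrite /enorm -/(sq y) -/B Bz sqrtr0.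
  move: C0; rewrite /C big1 ?ltxx // => i _; rewrite Hy mxE mulr0 //.
have Bpos : 0 < B by rewrite lt_neqAle eq_sym Bp B0.
have H1 : 0 <= B * (A * B - C ^+ 2).
  by rewrite -key; apply: sumr_ge0 => i _; exact: sqr_ge0.
have H2 : C ^+ 2 <= A * B by rewrite -subr_ge0 -(pmulr_rge0 _ Bpos).
rewrite /enorm -sqrtrM ?sq_ge0 // -/A -/B.
rewrite -(ger0_norm (ltW C0)) -sqrtr_sqr.
by rewrite ler_sqrt // mulr_ge0 ?sq_ge0.
Qed.

Lemma enormD x y : enorm (x + y) <= enorm x + enorm y.
Proof.
have e2 : enorm (x + y) ^+ 2 <= (enorm x + enorm y) ^+ 2.
  rewrite enorm_sq sqrrD !enorm_sq.
  have -> : sq (x + y) = sq x + 2 * \sum_(i < n) x ord0 i * y ord0 i + sq y.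
    rewrite /sq mulr_sumr -!big_split /=; apply: eq_bigr => i _; rewrite mxE; ring.
  have := cauchy x y; lra.
by apply: le_sq_le => //; rewrite ?addr_ge0 ?enorm_ge0.
Qed.

Lemma enorm_dist x y : `|enorm x - enorm y| <= enorm (x - y).
Proof.
rewrite ler_norml; apply/andP; split.
  have := enormD (y - x) x; rewrite subrK enormB; lra.
have := enormD (x - y) y; rewrite subrK; lra.
Qed.

Lemma enorm_coord x i : `|x ord0 i| <= enorm x.
Proof.
apply: le_sq_le; rewrite ?normr_ge0 ?enorm_ge0 //.
rewrite real_normK ?num_real // enorm_sq /sq (bigD1 i) //=.
by rewrite lerDl sumr_ge0 // => j _; exact: sqr_ge0.
Qed.

Lemma enorm_le_sum x : enorm x <= \sum_(i < n) `|x ord0 i|.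
Proof.
have S0 : 0 <= \sum_(i < n) `|x ord0 i| by apply: sumr_ge0 => i _.
apply: le_sq_le; rewrite ?enorm_ge0 //.
rewrite enorm_sq /sq.
rewrite expr2 mulr_suml; apply: ler_sum => i _.
rewrite mulr_sumr (bigD1 i) //= -normrM -expr2 ger0_norm ?sqr_ge0 //.
by rewrite lerDl sumr_ge0 // => j _; rewrite mulr_ge0.
Qed.


Definition incr (f : nat -> nat) := forall m, (f m < f m.+1)%N.
Definition ev (P : nat -> Prop) := exists N, forall m, (N <= m)%N -> P m.
Definition dir x : V := (enorm x)^-1 *: x.

Lemma incr_mono f : incr f -> forall m k, (m < k)%N -> (f m < f k)%N.
Proof.
move=> fi m k; elim: k => // k IH; rewrite ltnS leq_eqVlt => /orP[/eqP->|mk].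
  exact: fi.
exact: ltn_trans (IH mk) (fi k).
Qed.
Lemma incr_ge f : incr f -> forall m, (m <= f m)%N.
Proof.
move=> fi; elim=> // m IH; exact: leq_ltn_trans IH (fi m).
Qed.
Lemma incr_comp f g : incr f -> incr g -> incr (f \o g).
Proof. by move=> fi gi m; apply: (incr_mono fi); exact: gi. Qed.
Lemma incr_shift K : incr (fun i => (i + K)%N).
Proof. by move=> m; rewrite addSn. Qed.
Lemma incr_id : incr id.
Proof. by []. Qed.

Lemma ev_sub f P : incr f -> ev P -> ev (P \o f).
Proof.
move=> fi [N HN]; exists N => m Nm; apply: HN; exact: leq_trans Nm (incr_ge fi m).
Qed.
Lemma ev_and (P Q : nat -> Prop) : ev P -> ev Q -> ev (fun m => P m /\ Q m).
Proof.
move=> [N1 H1] [N2 H2]; exists (maxn N1 N2) => m; rewrite geq_max => /andP[a b].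
by split; [apply: H1|apply: H2].
Qed.
Lemma ev_mono (P Q : nat -> Prop) : (forall m, P m -> Q m) -> ev P -> ev Q.
Proof. by move=> PQ [N H]; exists N => m /H /PQ. Qed.

Lemma cvg_sub (u : nat -> V) (l : V) f : incr f -> seq_cvg u l -> seq_cvg (u \o f) l.
Proof. by move=> fi H e e0; apply: (ev_sub fi (H e e0)). Qed.

Lemma seq_cvgE (u : nat -> V) : seq_cvg u 0 <-> forall e, 0 < e -> ev (fun m => enorm (u m) < e).
Proof.
split=> H e e0; have [N HN] := H e e0; exists N => m /HN; by rewrite ?subr0.
Qed.

Lemma dir0 : dir 0 = 0.
Proof. by rewrite /dir scaler0. Qed.
Lemma enorm_dir x : x != 0 -> enorm (dir x) = 1.
Proof.
move=> xn; have xp := enorm_gt0 xn.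
rewrite /dir enormZ ger0_norm ?invr_ge0 ?enorm_ge0 // mulVf // gt_eqF //.
Qed.
Lemma dir_scale x : x != 0 -> enorm x *: dir x = x.
Proof.
move=> xn; have xp := enorm_gt0 xn.
by rewrite /dir scalerA mulfV ?scale1r // gt_eqF.
Qed.
Lemma dir_diff x y : x != 0 -> enorm (dir x - dir y) <= 2 * enorm (x - y) / enorm x.
Proof.
move=> xn; have xp := enorm_gt0 xn.
have [->|yn] := eqVneq y 0.
  by rewrite dir0 subr0 subr0 enorm_dir // -mulrA mulfV ?mulr1 ?gt_eqF //; lra.
have yp := enorm_gt0 yn.
have -> : dir x - dir y = (enorm x)^-1 *: (x - y) + ((enorm x)^-1 - (enorm y)^-1) *: y.
  by rewrite /dir scalerBr scalerBl addrA subrK.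
apply: le_trans (enormD _ _) _.
rewrite !enormZ ger0_norm ?invr_ge0 ?enorm_ge0 //.
have -> : `|(enorm x)^-1 - (enorm y)^-1| * enorm y = `|enorm y - enorm x| / enorm x.
  have -> : (enorm x)^-1 - (enorm y)^-1 = (enorm y - enorm x) / (enorm x * enorm y).
    by field; rewrite !gt_eqF.
  rewrite normrM normfV (ger0_norm (mulr_ge0 (enorm_ge0 x) (enorm_ge0 y))).
  by field; rewrite !gt_eqF.
have := enorm_dist y x; rewrite enormB => Hd.
rewrite mulrC.
have -> : 2 * enorm (x - y) / enorm x = enorm (x - y) / enorm x + enorm (x - y) / enorm x.
  by field; rewrite gt_eqF.
by rewrite lerD2l ler_pM2r ?invr_gt0 //; rewrite enormB.
Qed.

Lemma abs_small (a : R) : (forall e, 0 < e -> `|a| < e) -> a = 0.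
Proof.
move=> H; have [//|an] := eqVneq a 0.
have p : 0 < `|a| by rewrite normr_gt0.
by have := H _ p; rewrite ltxx.
Qed.

Lemma cvg_norm1 (u : nat -> V) c : seq_cvg u c -> ev (fun m => enorm (u m) = 1) -> enorm c = 1.
Proof.
move=> Hu [N HN]; apply/eqP; rewrite -subr_eq0; apply/eqP; apply: abs_small => e e0.
have [N2 H2] := Hu e e0; have := HN (maxn N N2) (leq_maxl _ _).
have := H2 (maxn N N2) (leq_maxr _ _).
move=> h1 h2; rewrite -h2; apply: le_lt_trans h1; rewrite enormB; exact: enorm_dist.
Qed.

Lemma ev_nonzero (x : nat -> V) d : seq_cvg (fun m => dir (x m)) d -> enorm d = 1 ->
  ev (fun m => x m != 0).
Proof.
move=> H d1; have [N HN] := H 1 ltr01; exists N => m /HN.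
apply: contraTN => /eqP ->; rewrite dir0 sub0r enormN d1 ltxx //.
Qed.



Lemma inv_small (e : R) : 0 < e -> exists N, forall m, (N <= m)%N -> (m.+1%:R)^-1 < e.
Proof.
move=> e0; exists (Num.Def.archi_bound e^-1) => m Nm.
have h1 : e^-1 < (Num.Def.archi_bound e^-1)%:R.
  by apply: archi_boundP; rewrite invr_ge0 ltW.
have h2 : (Num.Def.archi_bound e^-1)%:R <= m.+1%:R :> R.
  by rewrite ler_nat; exact: leq_trans Nm (leqnSn m).
rewrite -[e]invrK ltf_pV2 ?posrE ?invr_gt0 ?ltr0Sn //.
exact: lt_le_trans h1 h2.
Qed.

Lemma enorm_sub_le x y : enorm y <= enorm x + enorm (x - y).
Proof. by have := enormD x (- (x - y)); rewrite enormN opprB addrC subrK. Qed.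

Lemma transfer (x y : nat -> V) d : seq_cvg x 0 -> seq_cvg (fun m => dir (x m)) d ->
  enorm d = 1 -> negligible (fun m => x m - y m) x ->
  [/\ seq_cvg y 0, seq_cvg (fun m => dir (y m)) d & ev (fun m => y m != 0)].
Proof.
move=> Hx Hd d1 Hn.
have xn := ev_nonzero Hd d1.
split.
- apply/seq_cvgE => e e0.
  have h1 := (seq_cvgE x).1 Hx (e / 2) ltac:(lra).
  have := ev_and h1 (Hn 1 ltr01); apply: ev_mono => m [a b].
  have := enorm_sub_le (x m) (y m); rewrite mul1r in b; lra.
- move=> e e0.
  have h1 := Hd (e / 2) ltac:(lra).
  have := ev_and (ev_and h1 xn) (Hn (e / 4) ltac:(lra)).
  apply: ev_mono => m [[a b] c].
  have xp := enorm_gt0 b.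
  have h2 := dir_diff (y m) b.
  have h3 : 2 * enorm (x m - y m) / enorm (x m) <= e / 2.
    by rewrite ler_pdivrMr //; nra.
  have := enormD (dir (y m) - dir (x m)) (dir (x m) - d).
  rewrite addrA subrK enormB; lra.
- have := ev_and xn (Hn (1 / 2) ltac:(lra)); apply: ev_mono => m [a b].
  apply/negP => /eqP yz; move: b; rewrite yz subr0.
  have := enorm_gt0 a; lra.
Qed.

Lemma dmem (X : set V) (x : nat -> V) d : seq_cvg x 0 -> seq_cvg (fun m => dir (x m)) d ->
  enorm d = 1 -> ev (fun m => X (x m)) -> Dset X d.
Proof.
move=> Hx Hd d1 HX.
have [N HN] := ev_and (ev_nonzero Hd d1) HX.
split=> //; exists (fun i => x (i + N)%N); split; last split.
- by move=> i; have [a b] := HN (i + N)%N (leq_addl _ _).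
- exact: (cvg_sub (incr_shift N) Hx).
- exact: (cvg_sub (incr_shift N) Hd).
Qed.

Lemma LD_of_D (X Y : set V) : Dset X = Dset Y -> LD X = LD Y.
Proof. by rewrite /LD => ->. Qed.

Lemma D_sub_of_LD (X Y : set V) : LD X `<=` LD Y -> Dset X `<=` Dset Y.
Proof.
move=> H a Da.
have [t [b [t0 [Db ab]]]] : LD Y a by apply: H; exists 1, a; rewrite scale1r.
have : enorm a = 1 by case: Da.
have b1 : enorm b = 1 by case: Db.
rewrite ab enormZ b1 mulr1 ger0_norm // => t1.
by rewrite t1 scale1r.
Qed.

Lemma D_of_LD (X Y : set V) : LD X = LD Y -> Dset X = Dset Y.
Proof.
move=> H; apply/seteqP; split; apply: D_sub_of_LD; rewrite H //.
Qed.

Lemma D_LD (X : set V) : Dset (LD X) = Dset X.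
Proof.
apply/seteqP; split => d.
- case=> d1 [x [Hx [H0 Hd]]].
  have step : forall m, exists w, (X w /\ w != 0) /\ enorm w < (m.+1%:R)^-1 /\
      enorm (dir w - dir (x m)) < (m.+1%:R)^-1.
    move=> m; have [[t [a [t0 [Da xa]]]] xn] := Hx m.
    have tn : t != 0 by apply: contraNneq xn => t0'; rewrite xa t0' scale0r.
    have a1 : enorm a = 1 by case: Da.
    have dxa : dir (x m) = a.
      rewrite /dir xa enormZ a1 mulr1 ger0_norm // scalerA mulVf ?scale1r //.
    case: Da => _ [z [Hz [Hz0 Hzd]]].
    have ep : 0 < (m.+1%:R : R)^-1 by rewrite invr_gt0 ltr0Sn.
    have [N HN] := ev_and ((seq_cvgE z).1 Hz0 _ ep) (Hzd _ ep).
    have [a' b'] := HN N (leqnn N).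
    exists (z N); split; first exact: Hz.
    by rewrite dxa; split; [exact: a'| exact: b'].
  have [w Hw] := choice step.
  apply: (@dmem X w d).
  + apply/seq_cvgE => e e0; have [N HN] := inv_small e0; exists N => m Nm.
    by have [_ [h _]] := Hw m; apply: lt_trans h (HN m Nm).
  + move=> e e0.
    have [N HN] := inv_small (ltac:(lra) : 0 < e / 2).
    have := ev_and (Hd (e / 2) ltac:(lra)) (ex_intro _ N HN : ev _).
    apply: ev_mono => m [a b].
    have [_ [_ c]] := Hw m.
    have := enormD (dir (w m) - dir (x m)) (dir (x m) - d).
    have a2 : enorm (dir (x m) - d) < e / 2 := a.
    rewrite addrA subrK => hh; have h := lt_trans c b.
    apply: (le_lt_trans hh); rewrite [e]splitr; exact: ltrD h a2.
  + by [].
  + by exists 0%N => m _; have [[]] := Hw m.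
- move=> Dd; have d1 : enorm d = 1 by case: Dd.
  split=> //; exists (fun m => (m.+1%:R)^-1 *: d).
  have ep : forall m, 0 < (m.+1%:R : R)^-1 by move=> m; rewrite invr_gt0 ltr0Sn.
  have nx : forall m, enorm ((m.+1%:R)^-1 *: d) = (m.+1%:R)^-1.
    by move=> m; rewrite enormZ d1 mulr1 ger0_norm // ltW.
  split; last split.
  + move=> i; split; first by exists (i.+1%:R)^-1, d; split; [exact: ltW|].
    apply/negP => /eqP H; have := nx i; rewrite H enorm0 => h.
    by have := ep i; rewrite -h ltxx.
  + apply/seq_cvgE => e e0; have [N HN] := inv_small e0; exists N => m Nm.
    by rewrite nx; exact: HN.
  + move=> e e0; exists 0%N => m _.
    rewrite nx scalerA mulVf ?scale1r ?subrr ?enorm0 // gt_eqF //.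
Qed.

Lemma LD_LD (X : set V) : LD (LD X) = LD X.
Proof. exact: LD_of_D (D_LD X). Qed.



Lemma bw_real (u : nat -> R) M : (forall m, `|u m| <= M) ->
  exists f, incr f /\ exists l, forall e, 0 < e -> exists N, forall m, (N <= m)%N -> `|u (f m) - l| < e.
Proof.
move=> HM.
have bu : bounded_fun (u : R^nat).
  exists M; split; first by rewrite num_real.
  move=> x Mx y _ /=. apply: le_trans (HM y) _. exact: ltW.
have [f /increasing_seqP fi cf] := bolzano_weierstrass bu.
exists f; split; first by move=> m; exact: (fi m).
exists (lim (u \o f @ \oo)).
move=> e e0. have := (cvgrPdist_lt _ _).1 cf e e0.
case=> N _ HN. exists N => m Nm. rewrite distrC. exact: (HN m Nm).
Qed.

Lemma ev_all (P : 'I_n -> nat -> Prop) : (forall i, ev (P i)) -> ev (fun m => forall i, P i m).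
Proof.
move=> H; have [N HN] := choice H.
exists (\big[maxn/0%N]_(i < n) N i) => m Hm i; apply: HN.
exact: leq_trans (@leq_bigmax _ N i) Hm.
Qed.

Lemma bw_vec (u : nat -> V) : (forall m, enorm (u m) <= 1) ->
  exists f, incr f /\ exists c, seq_cvg (u \o f) c.
Proof.
move=> Hu.
have key : forall k, exists f, incr f /\ exists L : 'I_n -> R, forall i : 'I_n, (i < k)%N ->
   forall e, 0 < e -> ev (fun m => `|u (f m) ord0 i - L i| < e).
  elim=> [|k [f [fi [L HL]]]]; first by exists id; split; [exact: incr_id| exists (fun=> 0)].
  case: (ltnP k n) => kn; last first.
    exists f; split => //; exists L => i ik; apply: HL; exact: leq_trans (ltn_ord i) kn.
  pose i0 : 'I_n := Ordinal kn.
  have [g [gi [l Hl]]] := @bw_real (fun m => u (f m) ord0 i0) 1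
     (fun m => le_trans (enorm_coord _ _) (Hu (f m))).
  exists (f \o g); split; first exact: incr_comp.
  exists (fun i => if i == i0 then l else L i) => i ik e e0.
  case: eqP => [->|ne]; first exact: Hl.
  have ik' : (i < k)%N.
    rewrite ltnS leq_eqVlt in ik; case/orP: ik => // /eqP ik.
    by exfalso; apply: ne; apply: val_inj.
  exact: (ev_sub gi (HL i ik' e e0)).
have [f [fi [L HL]]] := key n.
exists f; split => //; exists (\row_i L i) => e e0.
have e'0 : 0 < e / n.+1%:R by rewrite divr_gt0 // ltr0Sn.
have := ev_all (fun i => HL i (ltn_ord i) _ e'0); apply: ev_mono => m Hm.
apply: le_lt_trans (enorm_le_sum _) _.
apply: (@le_lt_trans _ _ (\sum_(i < n) e / n.+1%:R)).
  by apply: ler_sum => i _; rewrite !mxE; exact: ltW (Hm i).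
rewrite sumr_const card_ord -[X in X < _]mulr_natr.
have -> : e / n.+1%:R * n%:R = e - e / n.+1%:R.
  have n0 : (0 : R) <= n%:R by exact: ler0n.
  have hn : (n%:R + 1 : R) != 0 by rewrite gt_eqF //; lra.
  by rewrite -addn1 natrD; field.
by rewrite ltrBlDr ltrDl.
Qed.

Lemma bw_dir (x : nat -> V) : exists f, incr f /\ exists c,
  seq_cvg (fun m => dir (x (f m))) c.
Proof.
have := @bw_vec (fun m => dir (x m)).
case.
  move=> m; have [->|xn] := eqVneq (x m) 0; first by rewrite dir0 enorm0 ler01.
  by rewrite enorm_dir.
move=> f [fi [c Hc]]; exists f; split => //; exists c; exact: Hc.
Qed.



Definition approx (x : nat -> V) (Y : set V) :=
  exists y : nat -> V, ev (fun m => Y (y m)) /\ negligible (fun m => x m - y m) x.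
Definition Sim (X Y : set V) := forall x : nat -> V,
  ev (fun m => X (x m) /\ x m != 0) -> seq_cvg x 0 -> approx x Y.

Lemma inv_le (j k : nat) : (k <= j)%N -> (j.+1%:R : R)^-1 <= (k.+1%:R)^-1.
Proof. by move=> kj; rewrite lef_pV2 ?posrE ?ltr0Sn // ler_nat ltnS. Qed.

Lemma subsub (x : nat -> V) (Y : set V) :
  (forall f, incr f -> exists g, incr g /\ approx (fun m => x (f (g m))) Y) -> approx x Y.
Proof.
move=> H.
have [y0 Y0] : exists y0, Y y0.
  have [g [_ [y [[N HN] _]]]] := H id incr_id; exists (y N); exact: HN.
pose Q m k := exists y, Y y /\ enorm (x m - y) <= (k.+1%:R)^-1 * enorm (x m).
have claim : forall k, ev (fun m => Q m k).
  move=> k; apply: contrapT => nev.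
  have bad : forall N, exists m, (N <= m)%N /\ ~ Q m k.
    move=> N; case: (pselect (exists m, (N <= m)%N /\ ~ Q m k)) => // Hn.
    exfalso; apply: nev; exists N => m Nm; apply: contrapT => nq.
    by apply: Hn; exists m.
  have [M HM] := choice bad.
  pose phi := fix F (j : nat) : nat := match j with 0 => M 0%N | j'.+1 => M (F j').+1 end.
  have phii : incr phi.
    by move=> j /=; have [h _] := HM (phi j).+1.
  have phinq : forall j, ~ Q (phi j) k.
    by case=> [|j] /=; [exact: (HM 0%N).2 | exact: (HM (phi j).+1).2].
  have [g [gi [y [Hy Hn]]]] := H phi phii.
  have ep : 0 < (k.+1%:R : R)^-1 by rewrite invr_gt0 ltr0Sn.
  have [N HN] := ev_and Hy (Hn _ ep).
  have [a b] := HN N (leqnn N).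
  by apply: (phinq (g N)); exists (y N).
have w : forall m, exists y, Y y /\ forall k, (k <= m)%N -> Q m k ->
    enorm (x m - y) <= (k.+1%:R)^-1 * enorm (x m).
  move=> m.
  have gen : forall j, exists y, Y y /\ forall k, (k <= j)%N -> Q m k ->
      enorm (x m - y) <= (k.+1%:R)^-1 * enorm (x m).
    elim=> [|j [yj [Yj Hj]]].
      case: (pselect (Q m 0%N)) => [[y [Yy Hy]]|nq].
        by exists y; split=> // k; rewrite leqn0 => /eqP -> _.
      by exists y0; split => // k; rewrite leqn0 => /eqP -> /nq.
    case: (pselect (Q m j.+1)) => [[y [Yy Hy]]|nq].
      exists y; split=> // k kj _; apply: le_trans Hy _.
      by apply: ler_wpM2r; [exact: enorm_ge0| exact: inv_le].
    exists yj; split=> // k; rewrite leq_eqVlt => /orP[/eqP -> /nq [] | kj].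
    exact: Hj.
  exact: gen m.
have [y Hy] := choice w.
exists y; split; first by exists 0%N => m _; have [] := Hy m.
move=> e e0; have [K HK] := inv_small e0.
have [N HN] := claim K.
exists (maxn N K) => m; rewrite geq_max => /andP[Nm Km].
have [_ Hm] := Hy m; apply: le_trans (Hm K Km (HN m Nm)) _.
apply: ler_wpM2r; first exact: enorm_ge0.
by apply: ltW; apply: HK.
Qed.

Lemma approx_fill (x : nat -> V) (Y : set V) : approx x Y ->
  exists y : nat -> V, (forall m, Y (y m)) /\ negligible (fun m => x m - y m) x.
Proof.
move=> [y [[N HN] Hn]].
exists (fun m => if (m < N)%N then y N else y m); split.
  by move=> m; case: ltnP => h; apply: HN.
move=> e e0; have [N1 H1] := Hn e e0; exists (maxn N N1) => m.
rewrite geq_max => /andP[a b]; rewrite ltnNge a /=; exact: H1.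
Qed.

Lemma negl_swap (x y : nat -> V) : negligible (fun m => x m - y m) x ->
  negligible (fun m => x m - y m) y.
Proof.
move=> Hn e e0.
have := ev_and (Hn (1 / 2) ltac:(lra)) (Hn (e / 2) ltac:(lra)).
apply: ev_mono => m [a b].
have c := enorm_sub_le (y m) (x m); rewrite enormB in c.
have h0 := enorm_ge0 (x m - y m).
have h1 := enorm_ge0 (y m).
have h2 : enorm (x m) <= 2 * enorm (y m) by lra.
apply: le_trans b _; nra.
Qed.

Lemma Sim_LD (X : set V) : Sim X (LD X).
Proof.
move=> x Hx H0; apply: subsub => f fi.
have [g [gi [c Hc]]] := bw_dir (x \o f).
have fgi := incr_comp fi gi.
have Hz : ev (fun m => X (x (f (g m))) /\ x (f (g m)) != 0) := ev_sub fgi Hx.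
have c1 : enorm c = 1.
  apply: (cvg_norm1 Hc); apply: ev_mono Hz => m [_ nz]; exact: enorm_dir.
have Dc : Dset X c.
  apply: (dmem (cvg_sub fgi H0) Hc c1).
  by apply: ev_mono Hz => m [].
exists g; split => //; exists (fun m => enorm (x (f (g m))) *: c); split.
  by exists 0%N => m _; exists (enorm (x (f (g m)))), c; split; [exact: enorm_ge0|].
move=> e e0; have := ev_and (Hc e e0) Hz; apply: ev_mono => m [a [_ nz]].
rewrite -{1}(dir_scale nz) -scalerBr enormZ ger0_norm ?enorm_ge0 // mulrC.
by apply: ler_wpM2r; [exact: enorm_ge0| exact: ltW].
Qed.

Lemma SSP_Sim (X : set V) : SSP X -> Sim (LD X) X.
Proof.
move=> HS x Hx H0; apply: subsub => f fi.
have [g [gi [c Hc]]] := bw_dir (x \o f).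
have fgi := incr_comp fi gi.
have Hz : ev (fun m => LD X (x (f (g m))) /\ x (f (g m)) != 0) := ev_sub fgi Hx.
have c1 : enorm c = 1.
  apply: (cvg_norm1 Hc); apply: ev_mono Hz => m [_ nz]; exact: enorm_dir.
have Dc : Dset (LD X) c.
  apply: (dmem (cvg_sub fgi H0) Hc c1).
  by apply: ev_mono Hz => m [].
rewrite D_LD in Dc.
have [b [Hb [Hn _]]] := HS (fun m => x (f (g m))) (cvg_sub fgi H0) (ex_intro _ c (conj Dc Hc)).
exists g; split => //; exists b; split => //; by exists 0%N.
Qed.

Lemma Sim_SSP (X : set V) : Sim (LD X) X -> SSP X.
Proof.
move=> HS a Ha [d [Dd Hd]].
have d1 : enorm d = 1 by case: Dd.
have Hd' : seq_cvg (fun m => dir (a m)) d := Hd.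
have an := ev_nonzero Hd' d1.
pose v m := enorm (a m) *: d.
have nv : forall m, enorm (v m) = enorm (a m).
  by move=> m; rewrite /v enormZ d1 mulr1 ger0_norm ?enorm_ge0.
have Hv : ev (fun m => LD X (v m) /\ v m != 0).
  apply: ev_mono an => m nz; split.
    by exists (enorm (a m)), d; split; [exact: enorm_ge0|split].

  apply/negP => /eqP h; have := nv m; rewrite h enorm0 => h2.
  by have := enorm_gt0 nz; rewrite -h2 ltxx.
have H0v : seq_cvg v 0.
  by apply/seq_cvgE => e e0; have [N HN] := (seq_cvgE a).1 Ha e e0; exists N => m /HN; rewrite nv.
have [w [Hw Hn]] := approx_fill (HS v Hv H0v).
have Hn' : negligible (fun m => a m - w m) a.
  move=> e e0.
  have := ev_and (ev_and (Hd' (e / 2) ltac:(lra)) an) (Hn (e / 2) ltac:(lra)).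
  apply: ev_mono => m [[h1 nz] h2].
  have -> : a m - w m = (a m - v m) + (v m - w m) by rewrite addrA subrK.
  apply: le_trans (enormD _ _) _.
  rewrite nv in h2.
  have h3 : enorm (a m - v m) <= e / 2 * enorm (a m).
    rewrite /v -{1}(dir_scale nz) -scalerBr enormZ ger0_norm ?enorm_ge0 // mulrC.
    by apply: ler_wpM2r; [exact: enorm_ge0| exact: ltW].
  lra.
exists w; split => //; split => //; exact: negl_swap.
Qed.

Lemma Sim_D (X Y : set V) : Sim X Y -> Dset X `<=` Dset Y.
Proof.
move=> HS d [d1 [x [Hx [H0 Hd]]]].
have [y [Hy Hn]] := HS x (ex_intro _ 0%N (fun m _ => Hx m)) H0.
have [Hy0 Hyd _] := transfer H0 Hd d1 Hn.
exact: dmem Hy0 Hyd d1 Hy.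
Qed.

Lemma Sim_LDeq (X Y : set V) : Sim X Y -> Sim Y X -> LD X = LD Y.
Proof.
move=> h1 h2; apply: LD_of_D; apply/seteqP; split; exact: Sim_D.
Qed.



Lemma cvg_negl (x y : nat -> V) : seq_cvg x 0 -> negligible (fun m => x m - y m) x ->
  seq_cvg y 0.
Proof.
move=> Hx Hn; apply/seq_cvgE => e e0.
have h1 := (seq_cvgE x).1 Hx (e / 2) ltac:(lra).
have := ev_and h1 (Hn 1 ltr01); apply: ev_mono => m [a b].
have := enorm_sub_le (x m) (y m); rewrite mul1r in b; lra.
Qed.

Lemma genT (X Y X' Y' : set V) (phi psi : V -> V) (rho L : R) :
 0 < rho -> 0 <= L ->
 (forall x, X x -> enorm x < rho -> X' (phi x)) ->
 (forall y, Y' y -> enorm y < rho -> Y (psi y)) ->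
 (forall x, X x -> enorm x < rho -> enorm (phi x) <= L * enorm x) ->
 (forall x y, X x -> Y' y -> enorm x < rho -> enorm y < rho ->
    enorm (x - psi y) <= L * enorm (phi x - y)) ->
 (forall x, X x -> enorm x < rho -> x != 0 -> phi x != 0) ->
 Sim X' Y' -> Sim X Y.
Proof.
move=> rho0 L0 H1 H2 H3 H4 H5 HS x Hx H0.
have Hs : ev (fun m => enorm (x m) < rho) := (seq_cvgE x).1 H0 rho rho0.
have Hx' : ev (fun m => X' (phi (x m)) /\ phi (x m) != 0).
  apply: ev_mono (ev_and Hx Hs) => m [[a b] c]; split; [exact: H1 | exact: H5].
have H0' : seq_cvg (fun m => phi (x m)) 0.
  apply/seq_cvgE => e e0.
  have eL : 0 < e / (L + 1) by rewrite divr_gt0 //; lra.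
  have := ev_and (ev_and Hx Hs) ((seq_cvgE x).1 H0 _ eL).
  apply: ev_mono => m [[[a _] b] c].
  rewrite ltr_pdivlMr in c; last by lra.
  have := H3 _ a b; have := enorm_ge0 (x m); nra.
have [y' [Hy' Hn]] := HS _ Hx' H0'.
have Hs' : ev (fun m => enorm (y' m) < rho) := (seq_cvgE y').1 (cvg_negl H0' Hn) rho rho0.
exists (fun m => psi (y' m)); split.
  by apply: ev_mono (ev_and Hy' Hs') => m [a b]; exact: H2.
move=> e e0.
pose e' := e / (L * L + 1).
have LL : 0 < L * L + 1 by nra.
have e'0 : 0 < e' by rewrite divr_gt0.
have he : e' * (L * L + 1) = e by rewrite /e' mulfVK // gt_eqF.
have := ev_and (ev_and (ev_and Hx Hs) (ev_and Hy' Hs')) (Hn e' e'0).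
apply: ev_mono => m [[[[a _] b] [c d]] f].
apply: le_trans (H4 _ _ a c b d) _.
apply: le_trans (ler_wpM2l L0 f) _.
rewrite mulrA.
have Le : 0 <= L * e' by rewrite mulr_ge0 // ltW.
apply: le_trans (ler_wpM2l Le (H3 _ a b)) _.
rewrite mulrA; apply: ler_wpM2r; first exact: enorm_ge0.
nra.
Qed.

End Norm.

Unset Implicit Arguments.

Theorem proposition2p14 (R : realType) (n : nat) (h : 'rV[R]_n -> 'rV[R]_n) (r : R)
  (A : set 'rV[R]_n) :
  bilip_homeo_germ h r -> zero_in_closure A ->
  ((LD (gimage h r A) = LD (gimage h r (LD A)) /\ SSP (gimage h r (LD A))) <->
   (LD (gpreimage h r (LD (gimage h r A))) = LD A /\
    SSP (gpreimage h r (LD (gimage h r A))))).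
Proof.
move=> [h0 [r0 [[K1 [K2 [K10 [K12 HK]]]] [s [s0 Hs]]]]] _.
set B := LD A.
set B' := gimage h r B.
set C := LD (gimage h r A).
set P := gpreimage h r C.
have K20 : 0 < K2 by apply: lt_le_trans K12.
pose L := K2 + K1^-1.
have L0 : 0 <= L by apply: addr_ge0; [exact: ltW | rewrite invr_ge0 ltW].
have b0 : Defs.ball0 r (0 : 'rV[R]_n) by rewrite /Defs.ball0 /= enorm0.
have hlip : forall x z, Defs.ball0 r x -> Defs.ball0 r z -> enorm (h x - h z) <= L * enorm (x - z).
  move=> x z bx bz; have [_ k] := HK x z bx bz; apply: le_trans k _.
  apply: ler_wpM2r; first exact: enorm_ge0.
  by rewrite /L lerDl invr_ge0 ltW.
have hinv : forall x z, Defs.ball0 r x -> Defs.ball0 r z -> enorm (x - z) <= L * enorm (h x - h z).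
  move=> x z bx bz; have [k _] := HK x z bx bz.
  have : enorm (x - z) <= K1^-1 * enorm (h x - h z).
    by rewrite ler_pdivlMl // .
  move=> k2; apply: le_trans k2 _; apply: ler_wpM2r; first exact: enorm_ge0.
  by rewrite /L lerDr ltW.
have hn : forall x, Defs.ball0 r x -> K1 * enorm x <= enorm (h x).
  by move=> x bx; have [k _] := HK x 0 bx b0; rewrite h0 !subr0 in k.
have hnz : forall x, Defs.ball0 r x -> x != 0 -> h x != 0.
  move=> x bx xn; apply/negP => /eqP hx; have := hn x bx; rewrite hx enorm0.
  have := enorm_gt0 xn => p; rewrite pmulr_rle0 //; lra.
have hle : forall x, Defs.ball0 r x -> enorm (h x) <= L * enorm x.
  by move=> x bx; have := hlip x 0 bx b0; rewrite h0 !subr0.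
pose Img y := exists x, Defs.ball0 r x /\ h x = y.
have [g Hg] : exists g : 'rV[R]_n -> 'rV[R]_n, forall y, Img y -> Defs.ball0 r (g y) /\ h (g y) = y.
  have step : forall y, exists z, Img y -> Defs.ball0 r z /\ h z = y.
    move=> y; case: (pselect (Img y)) => [[x [bx hx]]|ni]; first by exists x.
    by exists 0.
  by have [g Hg] := choice step; exists g.
have ghx : forall x, Defs.ball0 r x -> g (h x) = x.
  move=> x bx; have [bg hg] := Hg (h x) (ex_intro _ x (conj bx erefl)).
  have := hinv _ _ bg bx; rewrite hg subrr enorm0 mulr0 => k.
  apply/eqP; rewrite -subr_eq0; apply/eqP; apply: enorm_eq0.
  by apply/eqP; rewrite eq_le k enorm_ge0.
have ImgB' : forall y, B' y -> Img y /\ B (g y).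
  move=> y [x [Bx bx] <-]; split; first by exists x.
  by rewrite ghx.
have Imgs : forall y, Defs.ball0 s y -> Img y.
  by move=> y /Hs [x bx hx]; exists x.
have gle : forall y, Img y -> enorm (g y) <= L * enorm y.
  move=> y Iy; have [bg hg] := Hg y Iy; have := hn _ bg; rewrite hg => k.
  have k2 : enorm (g y) <= K1^-1 * enorm y by rewrite ler_pdivlMl.
  apply: le_trans k2 _; apply: ler_wpM2r; first exact: enorm_ge0.
  by rewrite /L lerDr ltW.
have gnz : forall y, Img y -> y != 0 -> g y != 0.
  move=> y Iy yn; apply/negP => /eqP gy; have [_ hg] := Hg y Iy.
  by move: yn; rewrite -hg gy h0 eqxx.
have rs0 : 0 < Order.min r s by rewrite lt_min r0 s0.
have minr1 : forall x : 'rV[R]_n, enorm x < Order.min r s -> Defs.ball0 r x.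
  by move=> x; rewrite lt_min => /andP[].
have mins1 : forall x : 'rV[R]_n, enorm x < Order.min r s -> Defs.ball0 s x.
  by move=> x; rewrite lt_min => /andP[].
have T1 : Sim B' C -> Sim B P.
  apply: (@genT R n B P B' C h g (Order.min r s) L rs0 L0).
  - by move=> x Bx bx; exists x => //; split => //; exact: minr1.
  - move=> y Cy by_; have [bg hg] := Hg y (Imgs _ (mins1 _ by_)).
    by split => //; rewrite /= hg.
  - by move=> x _ bx; apply: hle; exact: minr1.
  - move=> x y _ Cy bx by_; have [bg hg] := Hg y (Imgs _ (mins1 _ by_)).
    by have := hinv x (g y) (minr1 _ bx) bg; rewrite hg.
  - by move=> x _ bx; apply: hnz; exact: minr1.
have T2 : Sim C B' -> Sim P B.
  apply: (@genT R n P B C B' h g r L r0 L0).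
  - by move=> x [Cx _] _.
  - by move=> y /ImgB' [].
  - by move=> x [_ bx] _; exact: hle.
  - move=> x y [_ bx] /ImgB' [Iy _] _ _; have [bg hg] := Hg y Iy.
    by have := hinv x (g y) bx bg; rewrite hg.
  - by move=> x [_ bx] _; exact: hnz.
have T3 : Sim B P -> Sim B' C.
  apply: (@genT R n B' C B P g h r L r0 L0).
  - by move=> x /ImgB' [].
  - by move=> y [Cy _] _.
  - by move=> x /ImgB' [Ix _] _; exact: gle.
  - move=> x y /ImgB' [Ix _] [_ by_] _ _; have [bg hg] := Hg x Ix.
    by have := hlip (g x) y bg by_; rewrite hg.
  - by move=> x /ImgB' [Ix _] _; exact: gnz.
have T4 : Sim P B -> Sim C B'.
  apply: (@genT R n C B' P B g h (Order.min r s) L rs0 L0).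
  - move=> x Cx bx; have [bg hg] := Hg x (Imgs _ (mins1 _ bx)).
    by split => //; rewrite /= hg.
  - by move=> y By_ by_; exists y => //; split => //; exact: minr1.
  - by move=> x _ bx; exact: gle (Imgs _ (mins1 _ bx)).
  - move=> x y _ _ bx by_; have [bg hg] := Hg x (Imgs _ (mins1 _ bx)).
    by have := hlip (g x) y bg (minr1 _ by_); rewrite hg.
  - by move=> x _ bx; exact: gnz (Imgs _ (mins1 _ bx)).
have LeftE : (C = LD B' /\ SSP B') <-> (Sim B' C /\ Sim C B').
  split.
    move=> [e1 e2]; split; first by rewrite e1; exact: Sim_LD.
    by rewrite e1; exact: SSP_Sim.
  move=> [S1 S2]; have e := Sim_LDeq S1 S2.
  rewrite /C LD_LD in e.
  split; first by rewrite e.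
  by apply: Sim_SSP; rewrite e; exact: S2.
have RightE : (LD P = LD A /\ SSP P) <-> (Sim P B /\ Sim B P).
  split.
    move=> [e1 e2]; split; first by rewrite /B -e1; exact: Sim_LD.
    by rewrite /B -e1; exact: SSP_Sim.
  move=> [S1 S2]; have e := Sim_LDeq S1 S2.
  rewrite /B LD_LD in e.
  split; first by rewrite e.
  by apply: Sim_SSP; rewrite e.
rewrite LeftE RightE.
split; move=> [S1 S2]; split; auto.
Qed.
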